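(* Let $X$ be a set and $\tau$ a Hausdorff topology on $I(X)$ making it a topological inverse semigroup. Then the map $2^X\to(I(X),\tau)$, $A\mapsto 1_A$, is continuous if and only if the set of idempotents $\{1_A: A\subseteq X\}$ of $I(X)$ is $\tau$-compact.
   Context: $I(X)$ is the set of all bijections $f:A\to B$ with $A,B\subseteq X$ (including the empty map), with composition $\mathrm{dom}(f\circ g)=g^{-1}(\mathrm{dom}(f)\cap\mathrm{im}(g))$, $(f\circ g)(x)=f(g(x))$ and inverse $f^{-1}$. $1_A$ denotes the identity map on $A\subseteq X$; these are exactly the idempotents of $I(X)$. $2^X$ is the power set of $X$ with the product topology (identified with $\{0,1\}^X$). A topological inverse semigroup is one where multiplication and inversion are continuous. *)

(* Defs.v *)
From HB Require Import structures.
From mathcomp Require Import all_boot all_order.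
From mathcomp Require Import all_classical.
From mathcomp Require Import topology.
Set Implicit Arguments. Unset Strict Implicit. Unset Printing Implicit Defensive.
Local Open Scope classical_set_scope.

(* A partial bijection f : A -> B with A, B ⊆ X is encoded as a partial
   function X -> option X (None = undefined) which is injective on its
   domain; its domain is {x | f x <> None} and its image {y | exists x, f x = Some y}. *)
Record pbij (X : Type) := PBij {
  pfun :> X -> option X ;
  pfun_inj : forall x y z, pfun x = Some z -> pfun y = Some z -> x = y }.

Section IX.
Variable X : Type.

Definition pcomp_fun (f g : pbij X) : X -> option X :=
  fun x => match g x with Some y => f y | None => None end.

Lemma pcomp_inj (f g : pbij X) x y z :
  pcomp_fun f g x = Some z -> pcomp_fun f g y = Some z -> x = y.
Proof.
rewrite /pcomp_fun.
case Hx: (g x) => [x'|] //; case Hy: (g y) => [y'|] // fx fy.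
have e : x' = y' by exact: (pfun_inj fx fy).
by subst y'; exact: (pfun_inj Hx Hy).
Qed.

Definition pcomp (f g : pbij X) : pbij X := PBij (@pcomp_inj f g).

Definition pinv_fun (f : pbij X) : X -> option X :=
  fun y => match pselect (exists x, f x = Some y) with
           | left ex => Some (projT1 (cid ex))
           | right _ => None end.

Lemma pinv_inj (f : pbij X) x y z :
  pinv_fun f x = Some z -> pinv_fun f y = Some z -> x = y.
Proof.
rewrite /pinv_fun.
case: pselect => [ex|] //; case: pselect => [ey|] //.
case: (cid ex) => a /= fa; case: (cid ey) => b /= fb [<-] [e].
by subst b; rewrite fa in fb; case: fb.
Qed.

Definition pinv (f : pbij X) : pbij X := PBij (@pinv_inj f).

(* the partial identity 1_A, for A ⊆ X encoded as A : X -> bool *)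
Definition pid_fun (A : X -> bool) : X -> option X :=
  fun x => if A x then Some x else None.

Lemma pid_inj (A : X -> bool) x y z :
  pid_fun A x = Some z -> pid_fun A y = Some z -> x = y.
Proof. by rewrite /pid_fun; case: (A x) => // -[->]; case: (A y) => // -[->]. Qed.

Definition pid (A : X -> bool) : pbij X := PBij (@pid_inj A).

Definition idempotents : set (pbij X) := [set e | exists A, e = pid A].
End IX.

Section Topo.
Variable T : Type.

Definition is_topology (tau : set (set T)) : Prop :=
  [/\ tau setT,
      (forall (I : Type) (U : I -> set T), (forall i, tau (U i)) ->
          tau (\bigcup_i U i)) &
      (forall U V, tau U -> tau V -> tau (U `&` V))].

Definition hausdorff_top (tau : set (set T)) : Prop :=
  forall x y : T, x <> y ->
    exists U V, [/\ tau U, tau V, U x, V y & U `&` V = set0].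

Definition compact_in (tau : set (set T)) (K : set T) : Prop :=
  forall (I : Type) (U : I -> set T), (forall i, tau (U i)) ->
    K `<=` \bigcup_i U i ->
    exists F : set I, finite_set F /\ K `<=` \bigcup_(i in F) U i.
End Topo.

Definition prod_top (S T : Type) (sig : set (set S)) (tau : set (set T))
  : set (set (S * T)) :=
  [set W | forall p, W p ->
     exists U V, [/\ sig U, tau V, U p.1, V p.2 &
                     (forall a b, U a -> V b -> W (a, b))]].

Definition cont_top (S T : Type) (sig : set (set S)) (tau : set (set T))
  (f : S -> T) : Prop :=
  forall W, tau W -> sig (f @^-1` W).

Definition top_inverse_semigroup (X : Type) (tau : set (set (pbij X))) : Prop :=
  is_topology tau /\
  cont_top (prod_top tau tau) tau (fun p => pcomp p.1 p.2) /\
  cont_top tau tau (@pinv X).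

(* Main.v *)
Require Import Defs.
From HB Require Import structures.
From mathcomp Require Import all_boot all_order.
From mathcomp Require Import all_classical.
From mathcomp Require Import topology.
From mathcomp Require Import finmap.
Local Open Scope classical_set_scope.

Definition P2 (X : Type) := {ptws X -> bool}.
HB.instance Definition _ X := Topological.on (P2 X).
HB.instance Definition _ X := isPointed.Build (P2 X) (fun _ => false).

Lemma pbij_ext (X : Type) (f g : pbij X) : (forall x, f x = g x) -> f = g.
Proof.
case: f g => f fi [g gi] /= e.
have efg : f = g by apply: funext.
subst g; congr PBij; exact: Prop_irrelevance.
Qed.

Lemma ptws_compact (X : Type) : compact [set: P2 X].
Proof.
have := @tychonoff {classic X} (fun _ => bool) (fun _ => setT)
  (fun _ => @finite_compact bool setT (@finite_finset bool setT)).
by have -> : [set f : {classic X} -> bool | forall i, setT (f i)] = setT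
  by apply/seteqP; split.
Qed.

Lemma forward (X : Type) (tau : set (set (pbij X))) :
  (forall W, tau W -> open ((fun A : {ptws X -> bool} => pid A) @^-1` W)) ->
  compact_in tau (@idempotents X).
Proof.
move=> H I U Uop cov.
have := ptws_compact X; rewrite compact_cover => /(_ {classic I} setT
   (fun i => (fun A : P2 X => pid A) @^-1` U i)).
case.
- by move=> i _; exact: H.
- move=> A _; have [i _ Ui] := cov (pid A) (ex_intro _ A erefl).
  by exists i.
move=> D' _ HD; exists ([set` D'] : set I); split.
  exact: (finite_fset D').
move=> e [A ->]; have [i Di Ui] := HD A Logic.I.
by exists i.
Qed.

Section Back.
Variable X : Type.
Variable tau : set (set (pbij X)).
Hypothesis Htop : is_topology tau.

Lemma open_local (S : set (pbij X)) :
  (forall f, S f -> exists U, [/\ tau U, U f & U `<=` S]) -> tau S.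
Proof.
move=> H.
pose Uf (p : {f | S f}) := projT1 (cid (H _ (projT2 p))).
have -> : S = \bigcup_p Uf p.
  apply/seteqP; split.
    move=> f Sf; exists (exist _ f Sf) => //.
    by rewrite /Uf; case: cid => U /= [].
  move=> f [p _]; rewrite /Uf; case: cid => U /= [_ _]; exact.
case: Htop => _ Hu _; apply: Hu => p; rewrite /Uf; case: cid => U /= [] //.
Qed.

Hypothesis Hcomp : cont_top (prod_top tau tau) tau (fun p : pbij X * pbij X => Defs.pcomp p.1 p.2).
Hypothesis Hhaus : hausdorff_top tau.

Lemma slice_open (U : set (pbij X)) c : tau U -> tau [set f | U (Defs.pcomp f c)].
Proof.
move=> tU; apply: open_local => f Uf.
have := @Hcomp _ tU (f, c) Uf.
case=> U1 [V1 [t1 t2 U1f V1c HUV]]; exists U1; split => // g U1g.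
exact: (HUV g c U1g V1c).
Qed.

Lemma neq_open c d : tau [set f | Defs.pcomp f c <> d].
Proof.
apply: open_local => f Hf.
have [U [V [tU tV Uf Vd UV]]] := @Hhaus _ _ Hf.
exists [set g | U (Defs.pcomp g c)]; split => //; first exact: slice_open.
move=> g Ug eg; rewrite /= eg in Ug.
have : (U `&` V) d by [].
by rewrite UV.
Qed.


Definition c1 (x : X) : pbij X := pid (fun y => `[< y = x >]).
Definition c0 : pbij X := pid (fun _ : X => false).

Lemma comp_pid D x : Defs.pcomp (pid D) (c1 x) = if D x then c1 x else c0.
Proof.
case Dx: (D x); apply: pbij_ext => y /=; rewrite /Defs.pcomp_fun /pid_fun /=;
  idtac.
all: rewrite /pid_fun; have [exy|n] := pselect (y = x);
  [subst y; rewrite asboolT // ?Dx // | rewrite asboolF //].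
Qed.

Lemma c1_neq_c0 x : c1 x <> c0.
Proof.
move/(congr1 (fun f : pbij X => pfun f x)); rewrite /= /pid_fun asboolT //.
Qed.

Definition V (A : X -> bool) x : set (pbij X) :=
  [set f | Defs.pcomp f (c1 x) <> (if A x then c1 x else c0)].

Lemma mem_V D A x : V A x (pid D) <-> D x <> A x.
Proof.
rewrite /V /= comp_pid; have := @c1_neq_c0 x.
case: (D x); case: (A x); split => //.
all: try (by move=> h; case: h).
all: try (by move=> e h; apply: e; rewrite h).
all: try (by move=> e h; apply: e; rewrite -h).
by move=> _ h; apply: H; rewrite h.
Qed.

Lemma backward : compact_in tau (@idempotents X) ->
  forall W, tau W -> open ((fun A : {ptws X -> bool} => pid A) @^-1` W).
Proof.
move=> K W tW; rewrite openE => A WA.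
pose Uc (o : option X) := match o with None => W | Some x => V A x end.
have h1 : forall o, tau (Uc o) by case => [x|] //=; exact: neq_open.
have h2 : idempotents (X:=X) `<=` \bigcup_o Uc o.
  move=> e [D ->]; case: (pselect (W (pid D))) => [WD|nWD].
    by exists None.
  have [x Dx] : exists x, D x <> A x.
    apply: contrapT => hn; apply: nWD.
    have -> : D = A by apply: funext => x; apply: contrapT => h; apply: hn; exists x.
    exact: WA.
  by exists (Some x) => //; apply/mem_V.
have [F [fF cF]] := K _ Uc h1 h2.
move: fF => /(@finite_fsetP {classic (option X)}) [s es].
have HN : \forall B \near (A : {ptws X -> bool}),
    forall i : s, match fsval i with Some x => B x = A x | None => True end.
  apply: (@filter_forall _ s (fun i B => match fsval i with Some x => B x = A x | None => True end) (nbhs (A : {ptws X -> bool}))) => i.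
  case: (fsval i) => [x|]; last exact: filterT.
  have := @proj_continuous {classic X} (fun _ => bool) x A.
  move=> /(_ [set A x]) h; apply: h.
  by rewrite nbhs_principalE; apply/principal_filterP.
apply: filterS HN => B HB.
have [i Fi Ui] := cF (pid B) (ex_intro _ B erefl).
case: i Fi Ui => [x|] // Fi Ui.
have Fi' : (Some x : {classic (option X)}) \in s by move: Fi; rewrite es.
have := HB (FSetSub Fi'); move/mem_V: Ui => //.
Qed.

End Back.

Theorem theorem3p5 (X : Type) (tau : set (set (pbij X))) :
  top_inverse_semigroup tau -> hausdorff_top tau ->
  ((forall W, tau W -> open ((fun A : {ptws X -> bool} => pid A) @^-1` W))
   <-> compact_in tau (@idempotents X)).
Proof.
move=> [Ht [Hc _]] Hh; split; first exact: forward.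
exact: backward.
Qed.
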